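(* Let $q\ge5$ be even. (i) If $q=2^{2m+1}$, then $V_2=0$ and $V_1=q/2$. (ii) If $q=2^{2m}$, then $V_2=0$ and $V_1=\mathcal T_q$.
   Context: For $m'\in\{0,1,2,3\}$, $V_{m'}$ is the number of $\beta\in\mathbb F_q$ such that the cubic equation $t^3-3\beta t^2-1=0$ (in characteristic $2$: $t^3+\beta t^2+1=0$) has exactly $m'$ distinct solutions $t\in\mathbb F_q$. $\mathrm{Tr}_2$ denotes the absolute trace $\mathbb F_q\to\mathbb F_2$, and for $q=2^{2m}$, $\mathcal T_q=\#\{\beta\in\mathbb F_q:\mathrm{Tr}_2(\beta^3)=1\}$. *)

(* Defs.v *)
From mathcomp Require Import all_boot all_algebra all_field.
Set Implicit Arguments. Unset Strict Implicit. Unset Printing Implicit Defensive.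
Import GRing.Theory.
Local Open Scope ring_scope.

Definition cubic_sols (F : finFieldType) (b : F) : {set F} :=
  [set t : F | t ^+ 3 + b * t ^+ 2 + 1 == 0].

Definition V (F : finFieldType) (k : nat) : nat :=
  #|[set b : F | #|cubic_sols b| == k]|.

Definition abs_trace (F : finFieldType) (n : nat) (x : F) : F :=
  \sum_(i < n) x ^+ (2 ^ i).

Definition Tq (F : finFieldType) (n : nat) : nat :=
  #|[set b : F | abs_trace n (b ^+ 3) == 1]|.

(* Main.v *)
Require Import Defs.
From mathcomp Require Import all_boot all_algebra all_field.
From mathcomp Require Import ring zify.
Set Implicit Arguments. Unset Strict Implicit. Unset Printing Implicit Defensive.
Import GRing.Theory.
Local Open Scope ring_scope.

Lemma char2 (F : finFieldType) n : #|F| = (2 ^ n)%N -> (1 + 1 : F) = 0.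
Proof.
move=> hF; have := pcharf0 (card_finPcharP hF (erefl : prime 2)).
by rewrite -[2%N]/(1+1)%N natrD.
Qed.

Lemma c2x (F : finFieldType) (c2 : (1 + 1 : F) = 0) (x : F) : x + x = 0.
Proof. by rewrite -{1 2}[x]mul1r -mulrDl c2 mul0r. Qed.

Lemma c2N (F : finFieldType) (c2 : (1 + 1 : F) = 0) (x : F) : - x = x.
Proof. by apply/eqP; rewrite eq_sym -subr_eq0 opprK c2x. Qed.

Lemma c2eq (F : finFieldType) (c2 : (1 + 1 : F) = 0) (x y : F) : (x + y == 0) = (x == y).
Proof. by rewrite -[x == y]subr_eq0 (c2N c2). Qed.

Lemma sqrD2 (F : finFieldType) (c2 : (1 + 1 : F) = 0) (a b : F) :
  (a + b) ^+ 2 = a ^+ 2 + b ^+ 2.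
Proof.
have -> : (a + b) ^+ 2 = a ^+ 2 + b ^+ 2 + (a * b + a * b) by ring.
by rewrite (c2x c2) addr0.
Qed.

Lemma frobD (F : finFieldType) (c2 : (1 + 1 : F) = 0) i (a b : F) :
  (a + b) ^+ (2 ^ i) = a ^+ (2 ^ i) + b ^+ (2 ^ i).
Proof.
elim: i => [|i IH]; first by rewrite !expr1.
by rewrite expnS mulnC !exprM IH sqrD2.
Qed.

Lemma frob_sum (F : finFieldType) (c2 : (1 + 1 : F) = 0) n (f : 'I_n -> F) :
  (\sum_(i < n) f i) ^+ 2 = \sum_(i < n) f i ^+ 2.
Proof.
elim/big_rec2: _ => [|i y1 y2 _ <-]; first by rewrite expr0n.
by rewrite sqrD2.
Qed.

Lemma Tr_shift (F : finFieldType) n (hF : #|F| = (2 ^ n)%N) (y : F) :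
  \sum_(i < n) y ^+ (2 ^ i.+1) = abs_trace n y.
Proof.
rewrite /abs_trace.
have e : \sum_(i < n.+1) y ^+ (2 ^ i) = y + \sum_(i < n) y ^+ (2 ^ i.+1).
  by rewrite big_ord_recl expn0 expr1.
have e' : \sum_(i < n.+1) y ^+ (2 ^ i) = \sum_(i < n) y ^+ (2 ^ i) + y.
  by rewrite big_ord_recr /= -hF expf_card.
by apply: (@addrI _ y); rewrite -e e' addrC.
Qed.

Lemma Tr_sq (F : finFieldType) n (hF : #|F| = (2 ^ n)%N) (y : F) :
  abs_trace n (y ^+ 2) = abs_trace n y.
Proof.
rewrite -(Tr_shift hF y) /abs_trace; apply: eq_bigr => i _.
by rewrite -exprM expnS mulnC.
Qed.

Lemma TrD (F : finFieldType) n (hF : #|F| = (2 ^ n)%N) (a b : F) :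
  abs_trace n (a + b) = abs_trace n a + abs_trace n b.
Proof.
rewrite /abs_trace -big_split /=; apply: eq_bigr => i _.
by rewrite (frobD (char2 hF)).
Qed.

Lemma Tr_y2y (F : finFieldType) n (hF : #|F| = (2 ^ n)%N) (y : F) :
  abs_trace n (y ^+ 2 + y) = 0.
Proof. by rewrite TrD // Tr_sq // (c2x (char2 hF)). Qed.

Lemma Tr01 (F : finFieldType) n (hF : #|F| = (2 ^ n)%N) (y : F) :
  (abs_trace n y == 0) || (abs_trace n y == 1).
Proof.
have e : abs_trace n y ^+ 2 = abs_trace n y.
  rewrite {1}/abs_trace (frob_sum (char2 hF)) -[RHS](Tr_shift hF y).
  by apply: eq_bigr => i _; rewrite -exprM expnS mulnC.
have : abs_trace n y * (abs_trace n y - 1) == 0 by rewrite mulrBr mulr1 -expr2 e subrr.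
by rewrite mulf_eq0 subr_eq0.
Qed.

Lemma card_Tr_le (F : finFieldType) m (c : F) :
  (#|[set x : F | abs_trace m.+1 x == c]| <= 2 ^ m)%N.
Proof.
pose P : {poly F} := \sum_(i < m.+1) 'X^(2 ^ i).
pose Q := P - c%:P.
have hQ x : Q.[x] = abs_trace m.+1 x - c.
  by rewrite /Q hornerD hornerN hornerC /P horner_sum; congr (_ - _);
     apply: eq_bigr => i _; rewrite hornerXn.
have cQ : Q`_(2 ^ m) = 1.
  rewrite /Q coefB coefC /P coef_sum.
  have -> : (2 ^ m == 0)%N = false by rewrite expn_eq0.
  rewrite subr0 (bigD1 (ord_max)) //= coefXn eqxx big1 ?addr0 // => i hi.
  rewrite coefXn eq_sym eqn_exp2l // -[m]/(nat_of_ord (@ord_max m)).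
  by move: hi; rewrite -val_eqE => /negbTE ->.
have Qn0 : Q != 0 by apply/eqP => Q0; move: cQ; rewrite Q0 coef0 => /eqP; rewrite eq_sym oner_eq0.
have sQ : (size Q <= (2 ^ m).+1)%N.
  rewrite /Q (leq_trans (size_polyD _ _)) // geq_max size_polyN.
  rewrite (leq_trans (size_polyC_leq1 _)) // andbT.
  rewrite (leq_trans (size_sum _ _ _)) //; apply/bigmax_leqP => i _.
  by rewrite size_polyXn ltnS leq_pexp2l // -ltnS.
set S := [set x | _].
have := max_poly_roots Qn0 (_ : all (root Q) (enum S)) (enum_uniq (mem S)).
rewrite -cardE => /(_ _) H; rewrite -ltnS (leq_trans (H _)) //.
apply/allP => x; rewrite mem_enum inE => /eqP hx.
by rewrite /root hQ hx subrr.
Qed.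

Lemma card_Tr (F : finFieldType) m (hF : #|F| = (2 ^ m.+1)%N) :
  #|[set x : F | abs_trace m.+1 x == 0]| = (2 ^ m)%N /\
  #|[set x : F | abs_trace m.+1 x == 1]| = (2 ^ m)%N.
Proof.
have eC : [set x : F | abs_trace m.+1 x == 1] = ~: [set x : F | abs_trace m.+1 x == 0].
  apply/setP => x; rewrite !inE; have := Tr01 hF x.
  by case/orP => /eqP ->; rewrite ?eqxx ?oner_eq0 // eq_sym oner_eq0.
have h := cardsC [set x : F | abs_trace m.+1 x == 0].
rewrite -eC hF expnS in h.
have h0 := card_Tr_le m (0 : F); have h1 := card_Tr_le m (1 : F).
split; lia.
Qed.

Lemma Tr0_solv (F : finFieldType) m (hF : #|F| = (2 ^ m.+1)%N) (a : F) :
  abs_trace m.+1 a = 0 -> exists y, y ^+ 2 + y = a.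
Proof.
move=> ha; have c2 := char2 hF.
pose g := fun y : F => y ^+ 2 + y.
pose I := g @: [set: F].
have sub : I \subset [set x : F | abs_trace m.+1 x == 0].
  by apply/subsetP => _ /imsetP [y _ ->]; rewrite inE /g Tr_y2y.
have le2 : (#|F| <= #|I| * 2)%N.
  have -> : #|F| = (\sum_(y : F) 1)%N by rewrite sum1_card.
  rewrite (partition_big g (mem I)) /=; last by move=> i _; apply: imset_f.
  apply: (@leq_trans (\sum_(j in I) 2)%N); last by rewrite sum_nat_const.
  apply: leq_sum => j /imsetP [y0 _ ->].
  rewrite sum1dep_card (leq_trans (subset_leq_card (_ : _ \subset [set y0; y0 + 1]))) //; last by rewrite cards2; case: (_ != _).
  apply/subsetP => i; rewrite !inE /g => /eqP e.
  have : (i + y0) * (i + y0 + 1) == 0.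
    have -> : (i + y0) * (i + y0 + 1) = (i ^+ 2 + i) + (y0 ^+ 2 + y0) + (i * y0 + i * y0) by ring.
    by rewrite e (c2x c2 (y0 ^+ 2 + y0)) (c2x c2 (i * y0)) add0r.
  by rewrite mulf_eq0 -addrA (c2eq c2) (c2eq c2).
have [h0 _] := card_Tr hF.
have eI : I = [set x : F | abs_trace m.+1 x == 0].
  apply/eqP; rewrite eqEcard sub h0 /=; rewrite hF expnS in le2; by rewrite mulnC leq_pmul2r in le2.
have : a \in I by rewrite eI inE ha.
by case/imsetP => y _ ->; exists y.
Qed.

Lemma Kfact (F : finFieldType) (c2 : (1 + 1 : F) = 0) (b t x : F) :
  b * t ^+ 2 = t ^+ 3 + 1 ->
  t ^+ 4 * (x ^+ 3 + b * x ^+ 2 + 1) = (x + t) * ((x * t ^+ 2) ^+ 2 + x * t ^+ 2 + t ^+ 3).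
Proof.
move=> hb.
have -> : t ^+ 4 * (x ^+ 3 + b * x ^+ 2 + 1) =
  t ^+ 4 * x ^+ 3 + (b * t ^+ 2) * t ^+ 2 * x ^+ 2 + t ^+ 4 by ring.
rewrite hb.
have -> : (x + t) * ((x * t ^+ 2) ^+ 2 + x * t ^+ 2 + t ^+ 3) =
  t ^+ 4 * x ^+ 3 + (t ^+ 3 + 1) * t ^+ 2 * x ^+ 2 + t ^+ 4 + (x * t ^+ 3 + x * t ^+ 3) by ring.
by rewrite (c2x c2) addr0.
Qed.

Lemma roots_iff (F : finFieldType) (c2 : (1 + 1 : F) = 0) (b t x : F) :
  t != 0 -> b * t ^+ 2 = t ^+ 3 + 1 ->
  (x \in cubic_sols b) = (x == t) || ((x * t ^+ 2) ^+ 2 + x * t ^+ 2 + t ^+ 3 == 0).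
Proof.
move=> t0 hb; rewrite /cubic_sols inE.
have -> : (x ^+ 3 + b * x ^+ 2 + 1 == 0) = (t ^+ 4 * (x ^+ 3 + b * x ^+ 2 + 1) == 0).
  by rewrite mulf_eq0 expf_eq0 (negbTE t0) andbF.
by rewrite (Kfact c2 x hb) mulf_eq0 (c2eq c2).
Qed.

Lemma root_hb (F : finFieldType) (c2 : (1 + 1 : F) = 0) (b t : F) :
  t \in cubic_sols b -> t != 0 /\ b * t ^+ 2 = t ^+ 3 + 1.
Proof.
rewrite /cubic_sols inE => /eqP e; split.
  apply/eqP => t0; move: e; rewrite t0 !expr0n /= mulr0 !add0r => /eqP; by rewrite oner_eq0.
apply/eqP; rewrite -(c2eq c2).
have -> : b * t ^+ 2 + (t ^+ 3 + 1) = t ^+ 3 + b * t ^+ 2 + 1 by ring.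
by rewrite e.
Qed.

Lemma quad_shift (F : finFieldType) (c2 : (1 + 1 : F) = 0) (y c : F) :
  (y + 1) ^+ 2 + (y + 1) + c = y ^+ 2 + y + c.
Proof.
have -> : (y + 1) ^+ 2 + (y + 1) + c = y ^+ 2 + y + c + (y + y) + (1 + 1) by ring.
by rewrite (c2x c2) c2 !addr0.
Qed.

Lemma no_two (F : finFieldType) (c2 : (1 + 1 : F) = 0) (b : F) :
  #|cubic_sols b| != 2%N.
Proof.
apply/negP => /cards2P [t1 [t2 [ne e]]].
have t1in : t1 \in cubic_sols b by rewrite e !inE eqxx.
have t2in : t2 \in cubic_sols b by rewrite e !inE eqxx orbT.
have [t10 hb] := root_hb c2 t1in.
have t120 : t1 ^+ 2 != 0 by rewrite expf_eq0.
move: t2in; rewrite (roots_iff c2 _ t10 hb) eq_sym (negbTE ne) /=.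
set y2 := t2 * t1 ^+ 2 => q2.
pose x3 := (y2 + 1) / t1 ^+ 2.
have hx3 : x3 * t1 ^+ 2 = y2 + 1 by rewrite /x3 divfK.
have : x3 \in cubic_sols b by rewrite (roots_iff c2 _ t10 hb) hx3 quad_shift // q2 orbT.
rewrite e !inE => /orP [] /eqP ex.
  have h : t1 ^+ 3 = y2 + 1 by rewrite -hx3 ex -exprS.
  move: q2; rewrite h.
  have -> : y2 ^+ 2 + y2 + (y2 + 1) = (y2 + 1) ^+ 2 by ring.
  by rewrite -h !expf_eq0 /= (negbTE t10).
move: hx3; rewrite ex -/y2 -{1}[y2]addr0 => /addrI /eqP; rewrite eq_sym oner_eq0.
by [].
Qed.

Lemma Tr0 (F : finFieldType) n : abs_trace n (0 : F) = 0.
Proof. by rewrite /abs_trace big1 // => i _; rewrite expr0n expn_eq0. Qed.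

Lemma V1_eq (F : finFieldType) m (hF : #|F| = (2 ^ m.+1)%N) :
  #|[set b : F | #|cubic_sols b| == 1%N]| = #|[set t : F | abs_trace m.+1 (t ^+ 3) == 1]|.
Proof.
have c2 := char2 hF.
set A := [set t : F | abs_trace _ _ == 1].
pose phi := fun t : F => (t ^+ 3 + 1) / t ^+ 2.
have inA_ne0 t : t \in A -> t != 0.
  by rewrite inE; apply: contraTneq => ->; rewrite expr0n /= Tr0 eq_sym oner_eq0.
have phiE t : t != 0 -> phi t * t ^+ 2 = t ^+ 3 + 1.
  by move=> t0; rewrite /phi divfK // expf_eq0.
have solsA t : t \in A -> cubic_sols (phi t) = [set t].
  move=> tA; have t0 := inA_ne0 t tA.
  apply/setP => x; rewrite (roots_iff c2 _ t0 (phiE t t0)) inE.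
  case: (x == t) => //=; apply/negP; rewrite (c2eq c2) => /eqP q.
  move: tA; rewrite inE -q Tr_y2y //.
  by rewrite eq_sym oner_eq0.
have inj : {in A &, injective phi}.
  move=> t1 t2 h1 h2 e.
  have : t2 \in cubic_sols (phi t1) by rewrite e solsA // inE.
  by rewrite solsA // inE => /eqP.
suff -> : [set b : F | #|cubic_sols b| == 1%N] = phi @: A by rewrite card_in_imset.
apply/setP => b; rewrite inE; apply/idP/idP.
  case/cards1P => t e.
  have tin : t \in cubic_sols b by rewrite e inE.
  have [t0 hb] := root_hb c2 tin.
  have bE : b = phi t by rewrite /phi -hb mulfK // expf_eq0.
  apply/imsetP; exists t => //.
  rewrite inE; have := Tr01 hF (t ^+ 3); case/orP => // /eqP T0.
  have [y hy] := Tr0_solv hF T0.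
  pose x := y / t ^+ 2.
  have hx : x * t ^+ 2 = y by rewrite /x divfK // expf_eq0.
  have : x \in cubic_sols b by rewrite (roots_iff c2 _ t0 hb) hx hy (c2x c2) eqxx orbT.
  rewrite e inE => /eqP ex.
  move: hy; rewrite -hx ex -exprS => hy.
  have : t ^+ 3 ^+ 2 = 0 by apply: (@addIr _ (t ^+ 3)); rewrite hy add0r.
  by move/eqP; rewrite !expf_eq0 /= (negbTE t0).
case/imsetP => t tA ->.
by rewrite solsA // cards1.
Qed.

Lemma pow_odd j : exists k, (2 ^ (j.*2.+1) = 3 * k + 2)%N.
Proof.
elim: j => [|j [k ih]]; first by exists 0%N.
exists (4 * k + 2)%N; rewrite doubleS 2!expnS ih; lia.
Qed.

Lemma cube_inj (F : finFieldType) n (hF : #|F| = (2 ^ n)%N) : odd n ->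
  injective (fun t : F => t ^+ 3).
Proof.
move=> on.
have [k hk] := pow_odd n./2.
have hn : (n./2).*2.+1 = n by rewrite -[RHS]odd_double_half on add1n.
rewrite hn in hk.
have hx (x : F) : x ^+ (3 * k + 2) = x by rewrite -hk -hF expf_card.
move=> t s /= e.
have [s0|s0] := eqVneq s 0.
  by move: e; rewrite s0 expr0n /= => /eqP; rewrite expf_eq0 /= => /eqP.
pose u := t / s.
have u3 : u ^+ 3 = 1 by rewrite /u exprMn exprVn e divff // expf_eq0.
have u2 : u ^+ 2 = u by rewrite -{2}(hx u) exprD exprM u3 expr1n mul1r.
have : u * (u - 1) == 0 by rewrite mulrBr mulr1 -expr2 u2 subrr.
rewrite mulf_eq0 subr_eq0 => /orP [] /eqP hu.
  move: e; rewrite /u in hu; have : t = 0.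
    by apply/eqP; move: hu => /eqP; rewrite mulf_eq0 invr_eq0 (negbTE s0) orbF.
  by move=> ->; rewrite expr0n /= => /esym/eqP; rewrite expf_eq0 /= (negbTE s0).
by rewrite -(divfK s0 t) -/u hu mul1r.
Qed.


Theorem lemma4p5 (F : finFieldType) (n : nat) :
  #|F| = (2 ^ n)%N -> (5 <= 2 ^ n)%N ->
  (odd n -> V F 2 = 0%N /\ V F 1 = (2 ^ n %/ 2)%N) /\
  (~~ odd n -> V F 2 = 0%N /\ V F 1 = Tq F n).
Proof.
case: n => [|m] hF h5; first by [].
have c2 := char2 hF.
have V2 : V F 2 = 0%N.
  rewrite /V (_ : [set b | _] = set0) ?cards0 //.
  by apply/setP => b; rewrite !inE (negbTE (no_two c2 b)).
have V1 : V F 1 = #|[set t : F | abs_trace m.+1 (t ^+ 3) == 1]| by rewrite /V (V1_eq hF).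
split=> on; split=> //; rewrite V1 //.
have -> : [set t : F | abs_trace m.+1 (t ^+ 3) == 1] =
          (fun t : F => t ^+ 3) @^-1: [set x : F | abs_trace m.+1 x == 1].
  by apply/setP => t; rewrite !inE.
rewrite card_preimset; last exact: cube_inj hF on.
have [_ ->] := card_Tr hF.
by rewrite expnS mulKn.
Qed.
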